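(* Let $t_j^i=\binom{i}{j}$ for $0\le j\le i$ (Pascal's triangle), and let $b_n=\sum_{i=0}^{n}\sum_{j=0}^{i}\binom{n}{j,\,n-i,\,i-j}t_j^i$ be its tetrahedron coefficient transform. Then for all $n\ge 0$, $$b_n=\sum_{\ell=0}^{n}\binom{n}{\ell}\binom{2\ell}{\ell},$$ i.e., $(b_n)$ is the binomial transform of the central binomial coefficients.
   Context: For non-negative integers $p,q,r$ with $p+q+r=n$, $\binom{n}{p,q,r}=\frac{n!}{p!\,q!\,r!}$ denotes the tetrahedron trinomial coefficient. The binomial transform of a sequence $(a_\ell)$ is the sequence $\sum_{\ell=0}^n\binom{n}{\ell}a_\ell$. *)

(* Defs.v *)
From mathcomp Require Import all_boot.
Set Implicit Arguments. Unset Strict Implicit. Unset Printing Implicit Defensive.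

Definition trinom (n p q r : nat) : nat := n`! %/ (p`! * q`! * r`!).

Definition pascal (i j : nat) : nat := 'C(i, j).

Definition tetra_transform (t : nat -> nat -> nat) (n : nat) : nat :=
  \sum_(0 <= i < n.+1) \sum_(0 <= j < i.+1) trinom n j (n - i) (i - j) * t i j.

(* Main.v *)
Require Import Defs.
From mathcomp Require Import all_boot.

Lemma trinomE n i j : j <= i -> i <= n ->
  trinom n j (n - i) (i - j) = 'C(n, i) * 'C(i, j).
Proof.
move=> ji in_.
rewrite /trinom.
have -> : n`! = 'C(n, i) * 'C(i, j) * (j`! * (n - i)`! * (i - j)`!).
  rewrite -(bin_fact in_) -(bin_fact ji).
  by rewrite -!mulnA; do 3 congr (_ * _); rewrite mulnC.
by rewrite mulnK // !muln_gt0 !fact_gt0.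
Qed.

Lemma sum_sq i : \sum_(0 <= j < i.+1) 'C(i, j) * 'C(i, j) = 'C(2 * i, i).
Proof.
rewrite mul2n -addnn -Vandermonde big_mkord.
apply: eq_bigr => [[j hj]] _ /=.
by rewrite bin_sub.
Qed.

Theorem theorem10 (n : nat) :
  tetra_transform pascal n = \sum_(0 <= l < n.+1) 'C(n, l) * 'C(2 * l, l).
Proof.
rewrite /tetra_transform /pascal big_nat [RHS]big_nat.
apply: eq_bigr => i /andP [_ hi].
rewrite -sum_sq big_distrr /= !big_nat.
apply: eq_bigr => j /andP [_ hj].
by rewrite trinomE // mulnA.
Qed.
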